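(* Let $\mathcal{A}=\langle Q,\Sigma,\delta\rangle$ be an $n$-state DFA whose transition monoid is $T_n$, let $x\in\Sigma$ be a fixed letter of rank $n-1$, and let $k\ge 0$. If the digraph $\Gamma_k$ is strongly connected, then every proper non-empty subset $R\subset Q$ can be extended by some word of length at most $k+1$.
   Context: Words act on states letter by letter from left to right. The transition monoid is the monoid of transformations of $Q$ generated by the letters; $T_n$ is the monoid of all self-maps of an $n$-element set. A letter has rank $n-1$ if $|Q\cdot x|=n-1$. For such $x$, $\mathrm{excl}(x)$ is the unique state in $Q\setminus Q\cdot x$, and $\mathrm{dupl}(x)$ is the unique state $p$ with $p=q_1\cdot x=q_2\cdot x$ for some $q_1\ne q_2$. For a proper non-empty $R\subset Q$ and a word $w$, $R$ can be extended by $w$ if $|Rw^{-1}|>|R|$, where $Rw^{-1}=\{q\in Q\mid q\cdot w\in R\}$. Let $\Pi\subseteq\Sigma$ be the set of letters acting as permutations of $Q$, and $\Pi^i$ the set of words of length at most $i$ over $\Pi$ (including the empty word). $\Gamma_i$ is the digraph with vertex set $Q$ and edge set $E_i=\{(\mathrm{excl}(x)\cdot w,\ \mathrm{dupl}(x)\cdot w)\mid w\in\Pi^i\}$. *)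

(* Defs.v *)
From Stdlib Require Export Relations.Relation_Operators.
From mathcomp Require Import all_boot.
Set Implicit Arguments. Unset Strict Implicit. Unset Printing Implicit Defensive.

Definition act (Q S : finType) (delta : Q -> S -> Q) (q : Q) (w : seq S) : Q :=
  foldl delta q w.

Definition full_transition_monoid (Q S : finType) (delta : Q -> S -> Q) : Prop :=
  forall f : Q -> Q, exists w : seq S, forall q, act delta q w = f q.

Definition img (Q S : finType) (delta : Q -> S -> Q) (x : S) : {set Q} :=
  [set delta q x | q : Q].

Definition rank (Q S : finType) (delta : Q -> S -> Q) (x : S) : nat :=
  #|img delta x|.

(* p = excl(x) : p is not in Q.x  (unique when rank x = |Q|-1) *)
Definition is_excl (Q S : finType) (delta : Q -> S -> Q) (x : S) (p : Q) : Prop :=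
  p \notin img delta x.

(* p = dupl(x) : p = q1.x = q2.x for some q1 <> q2 (unique when rank x = |Q|-1) *)
Definition is_dupl (Q S : finType) (delta : Q -> S -> Q) (x : S) (p : Q) : Prop :=
  exists q1 q2 : Q, q1 <> q2 /\ delta q1 x = p /\ delta q2 x = p.

Definition is_perm_letter (Q S : finType) (delta : Q -> S -> Q) (a : S) : Prop :=
  injective (fun q => delta q a).

Definition in_Pi (Q S : finType) (delta : Q -> S -> Q) (i : nat) (w : seq S) : Prop :=
  size w <= i /\ (forall a, a \in w -> is_perm_letter delta a).

Definition Gamma_edge (Q S : finType) (delta : Q -> S -> Q) (x : S) (i : nat)
    (u v : Q) : Prop :=
  exists w p d, in_Pi delta i w /\ is_excl delta x p /\ is_dupl delta x d /\
    u = act delta p w /\ v = act delta d w.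

Definition strongly_connected (Q : Type) (e : Q -> Q -> Prop) : Prop :=
  forall u v : Q, clos_refl_trans Q e u v.

Definition preimg (Q S : finType) (delta : Q -> S -> Q) (R : {set Q}) (w : seq S)
  : {set Q} := [set q | act delta q w \in R].

Definition extendable_by (Q S : finType) (delta : Q -> S -> Q) (R : {set Q})
    (w : seq S) : Prop := #|R| < #|preimg delta R w|.

(* Main.v *)
Require Import Defs.
From mathcomp Require Import all_boot.

Lemma crt_cross {Q : finType} {e : Q -> Q -> Prop} {R : {set Q}} {u v} :
  clos_refl_trans Q e u v -> u \notin R -> v \in R ->
  exists a b, e a b /\ a \notin R /\ b \in R.
Proof.
move=> H; elim: H => [y z eyz|y|y z t _ IH1 _ IH2] Hu Hv.
- by exists y, z.
- by rewrite Hv in Hu.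
- case Hz: (z \in R); first by apply: IH1 => //.
  by apply: IH2 => //; rewrite Hz.
Qed.

Lemma act_inj {Q S : finType} {delta : Q -> S -> Q} {w} :
  (forall a, a \in w -> is_perm_letter delta a) ->
  injective (fun q => act delta q w).
Proof.
elim: w => [|a w IH] Hw q1 q2 /=; first by [].
rewrite /act /= => E.
have Ha := Hw a (mem_head a w).
have Hw' : forall b, b \in w -> is_perm_letter delta b.
  by move=> b hb; apply: Hw; rewrite in_cons hb orbT.
by apply: Ha; apply: (IH Hw').
Qed.

Theorem lemma1 (Q S : finType) (delta : Q -> S -> Q) (n : nat) (x : S) (k : nat) :
  #|Q| = n ->
  full_transition_monoid delta ->
  rank delta x = n.-1 ->
  strongly_connected (Gamma_edge delta x k) ->
  forall R : {set Q}, R != set0 -> R \proper [set: Q] ->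
    exists w : seq S, size w <= k.+1 /\ extendable_by delta R w.
Proof.
move=> Hn _ Hrk Hsc R R0 Rp.
have [v Hv] : exists v, v \in R by case/set0Pn: R0 => v; exists v.
have [u Hu] : exists u, u \notin R.
  case/properP: Rp => _ [u _ Hu]; by exists u.
case: (crt_cross (Hsc u v) Hu Hv : exists a b, _) => a [b [Hab [Ha Hb]]].
case: Hab => w [p [d [[Hsz Hperm] [Hp [[q1 [q2 [Hq12 [E1 E2]]]] [Ea Eb]]]]]].
subst a b.
exists (x :: w); split; first by [].
set T := preimg delta R w.
have HT : #|T| = #|R|.
  rewrite /T -(card_preimset R (act_inj (w:=w) Hperm)); apply: eq_card => q.
  by rewrite !inE.
have Himg : img delta x = [set~ p].
  apply/eqP; rewrite eqEcard cardsC1 -/(rank delta x) Hrk Hn leqnn andbT.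
  apply/subsetP => q Hq; rewrite !inE; apply/eqP => Eq; subst q.
  by move: Hp; rewrite /is_excl Hq.
set A := preimg delta R (x :: w).
have HA : (fun q => delta q x) @: A = T.
  apply/setP => t; apply/imsetP/idP.
    by case=> q; rewrite /A /T !inE /act /= => Hq ->.
  move=> Ht; have : t \in img delta x.
    rewrite Himg !inE; apply/eqP => Et; subst t.
    by move: Ht Ha; rewrite /T inE => ->.
  case/imsetP => q _ Eq; exists q => //.
  by move: Ht; rewrite /A /T Eq !inE.
rewrite /extendable_by -/A -HT -HA ltn_neqAle leq_imset_card andbT.
apply/negP => /imset_injP Hinj.
apply: Hq12; apply: Hinj; rewrite ?E1 ?E2 //.
  by rewrite /A inE /act /= E1.
by rewrite /A inE /act /= E2.
Qed.
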